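(* Let $0<\lambda\le\lambda_0$. Let $\boldsymbol\alpha_0^\star$ be the optimal solution of $\max_{\boldsymbol\alpha\ge\mathbf0}D_{\lambda_0}(\boldsymbol\alpha)$, and let $\boldsymbol\alpha_0\in\mathbb R^{2nK}_{\ge0}$ and $\epsilon\ge0$ satisfy $\|\boldsymbol\alpha_0-\boldsymbol\alpha_0^\star\|_2\le\epsilon$. Let $\mathbf m^\star$ be the optimal solution of $\min_{\mathbf m\ge\mathbf0}P_\lambda(\mathbf m)$. For $k\in[p]$ let $$a=\sum_{i\in[n]}\sum_{l\in\mathcal D_i}(\alpha_0)_{il}\max\{x_{l,k},x_{i,k}\}^2,\qquad b=\sqrt{\sum_{i\in[n]}\Big[\sum_{l\in\mathcal D_i}\max\{x_{i,k},x_{l,k}\}^4+\sum_{j\in\mathcal S_i}\max\{x_{i,k},x_{j,k}\}^4\Big]},$$ $$\lambda'_a=\frac{\lambda_0(2\epsilon b+\|\boldsymbol\alpha_0\|_2b+a)}{2\lambda_0+\|\boldsymbol\alpha_0\|_2b-a}.$$ If $\lambda'_a\le\lambda\le\lambda_0$, then $m^\star_{k'}=0$ for every descendant $k'\supseteq k$.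
   Context: Let $n,K,p\ge1$ be integers, $[n]=\{1,\dots,n\}$. For each $i\in[n]$ let $\mathbf x_i=(x_{i,1},\dots,x_{i,p})^\top\in\mathbb R^p$ have nonnegative entries and let $\mathcal D_i,\mathcal S_i\subseteq[n]$ be sets of size $K$. Put $\mathbf c_{ij}=(\mathbf x_i-\mathbf x_j)\circ(\mathbf x_i-\mathbf x_j)$ (entrywise product). Vectors in $\mathbb R^{2nK}$ are indexed by the pairs $(i,l)$, $l\in\mathcal D_i$ (''different-class pairs'') and $(i,j)$, $j\in\mathcal S_i$ (''same-class pairs''); $\boldsymbol\alpha_0$ has entries $(\alpha_0)_{il},(\alpha_0)_{ij}$. $\mathbf C\in\mathbb R^{p\times2nK}$ has column $\mathbf c_{il}$ for each different-class pair and $-\mathbf c_{ij}$ for each same-class pair. Fix $L\ge U\ge0$, $\eta>0$; let $\mathbf t\in\mathbb R^{2nK}$ have entry $L$ at different-class pairs and $-U$ at same-class pairs; $\ell_s(x)=([s-x]_+)^2$ with $[z]_+=\max\{z,0\}$ (entrywise for vectors); $\mathbf1$ is the all-ones vector. For $\lambda>0$, $$P_\lambda(\mathbf m)=\sum_{i\in[n]}\Big[\sum_{l\in\mathcal D_i}\ell_L(\mathbf m^\top\mathbf c_{il})+\sum_{j\in\mathcal S_i}\ell_{-U}(-\mathbf m^\top\mathbf c_{ij})\Big]+\lambda\Big(\mathbf m^\top\mathbf1+\frac\eta2\|\mathbf m\|_2^2\Big)\ (\mathbf m\in\mathbb R^p_{\ge0}),$$ $$D_\lambda(\boldsymbol\alpha)=-\frac14\|\boldsymbol\alpha\|_2^2+\mathbf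 t^\top\boldsymbol\alpha-\frac{\lambda\eta}2\Big\|\frac1{\lambda\eta}[\mathbf C\boldsymbol\alpha-\lambda\mathbf1]_+\Big\|_2^2\ (\boldsymbol\alpha\in\mathbb R^{2nK}_{\ge0}).$$ The feature indices $[p]$ are nodes of a rooted graph-mining tree: $x_{i,k}=g(\#(H_k\sqsubseteq G_i))$, where $H_k$ is the subgraph at node $k$, $G_i$ the $i$-th input graph, $\#(H\sqsubseteq G)$ the number of non-overlapping occurrences of $H$ in $G$, $g$ nonnegative and nondecreasing, and each node's subgraph is contained in its children's subgraphs. Write $k'\supseteq k$ if $k'$ is a descendant of $k$; in particular $0\le x_{i,k'}\le x_{i,k}$ for all $i$ whenever $k'\supseteq k$. *)

(* Defs.v *)
From HB Require Import structures.
From mathcomp Require Import all_boot all_order all_algebra.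
From mathcomp Require Import reals.
Set Implicit Arguments. Unset Strict Implicit. Unset Printing Implicit Defensive.
Import Order.TTheory GRing.Theory Num.Theory.
Local Open Scope ring_scope.

(* Index set of R^{2nK}: triples (b,i,j) with b = true for a different-class
   pair (j \in D i) and b = false for a same-class pair (j \in S i). *)
Definition pairb (n : nat) (D S : 'I_n -> {set 'I_n}) (q : bool * 'I_n * 'I_n) : bool :=
  let: (b, i, j) := q in if b then j \in D i else j \in S i.

Definition pidx (n : nat) (D S : 'I_n -> {set 'I_n}) : finType :=
  {q : bool * 'I_n * 'I_n | pairb D S q}.

Section Defs.
Variables (R : realType) (n p : nat) (x : 'I_n -> 'I_p -> R)
  (D S : 'I_n -> {set 'I_n}).

Definition qb (q : pidx D S) : bool := (sval q).1.1.
Definition qi (q : pidx D S) : 'I_n := (sval q).1.2.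
Definition qj (q : pidx D S) : 'I_n := (sval q).2.

Definition cvec (i j : 'I_n) (k : 'I_p) : R := (x i k - x j k) ^+ 2.

Definition loss (s y : R) : R := (Num.max (s - y) 0) ^+ 2.

Definition dotp (m c : 'I_p -> R) : R := \sum_(k < p) m k * c k.

Definition primal (L U eta lam : R) (m : 'I_p -> R) : R :=
  \sum_(i < n) (\sum_(l in D i) loss L (dotp m (cvec i l))
               + \sum_(j in S i) loss (- U) (- dotp m (cvec i j)))
  + lam * (\sum_(k < p) m k + eta / 2 * \sum_(k < p) m k ^+ 2).

(* column sign of C: +c_il for different-class, -c_ij for same-class *)
Definition sgnq (q : pidx D S) : R := if qb q then 1 else -1.
Definition tvec (L U : R) (q : pidx D S) : R := if qb q then L else - U.

Definition Cmul (al : pidx D S -> R) (k : 'I_p) : R :=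
  \sum_(q : pidx D S) sgnq q * cvec (qi q) (qj q) k * al q.

Definition norm2 (al : pidx D S -> R) : R := Num.sqrt (\sum_(q : pidx D S) al q ^+ 2).

Definition dual (L U eta lam : R) (al : pidx D S -> R) : R :=
  - (1 / 4) * \sum_(q : pidx D S) al q ^+ 2
  + \sum_(q : pidx D S) tvec L U q * al q
  - lam * eta / 2 *
      \sum_(k < p) ((lam * eta)^-1 * Num.max (Cmul al k - lam) 0) ^+ 2.

Definition dual_opt (L U eta lam : R) (al : pidx D S -> R) : Prop :=
  (forall q, 0 <= al q) /\
  (forall be : pidx D S -> R, (forall q, 0 <= be q) ->
     dual L U eta lam be <= dual L U eta lam al).

Definition primal_opt (L U eta lam : R) (m : 'I_p -> R) : Prop :=
  (forall k, 0 <= m k) /\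
  (forall m' : 'I_p -> R, (forall k, 0 <= m' k) ->
     primal L U eta lam m <= primal L U eta lam m').

Definition a_coef (al0 : pidx D S -> R) (k : 'I_p) : R :=
  \sum_(q : pidx D S | qb q) al0 q * (Num.max (x (qj q) k) (x (qi q) k)) ^+ 2.

Definition b_coef (k : 'I_p) : R :=
  Num.sqrt (\sum_(i < n) (\sum_(l in D i) (Num.max (x i k) (x l k)) ^+ 4
                          + \sum_(j in S i) (Num.max (x i k) (x j k)) ^+ 4)).

Definition lam_a (lam0 eps : R) (al0 : pidx D S -> R) (k : 'I_p) : R :=
  lam0 * (2 * eps * b_coef k + norm2 al0 * b_coef k + a_coef al0 k)
  / (2 * lam0 + norm2 al0 * b_coef k - a_coef al0 k).

End Defs.

(* Mining tree on the feature indices: par k = parent of node k.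
   desc par k k' : k' is a descendant of k (reflexive-transitive). *)
Definition desc (p : nat) (par : 'I_p -> option 'I_p) : rel 'I_p :=
  connect [rel a b | par b == Some a].

(* Main.v *)
Require Import Defs.
From HB Require Import structures.
From mathcomp Require Import all_boot all_order all_algebra.
From mathcomp Require Import reals.
From mathcomp Require Import ring lra.
Import Order.TTheory GRing.Theory Num.Theory.
Local Open Scope ring_scope.

Lemma sumQ_val (R : realType) n (D S : 'I_n -> {set 'I_n}) (G : bool * 'I_n * 'I_n -> R) :
  \sum_(q : pidx D S) G (sval q) = \sum_(v | pairb D S v) G v.
Proof.
rewrite (reindex_omap (val : pidx D S -> _) insub); last first.
  by move=> i Pi; rewrite insubT.
symmetry; apply: eq_bigl => -[v Pv] /=. by rewrite Pv insubT /= eqxx.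
Qed.

Lemma sumQ (R : realType) n (D S : 'I_n -> {set 'I_n}) (F : bool -> 'I_n -> 'I_n -> R) :
  \sum_(q : pidx D S) F (qb q) (qi q) (qj q) =
  \sum_i (\sum_(l in D i) F true i l + \sum_(j in S i) F false i j).
Proof.
rewrite /qb /qi /qj (sumQ_val R n D S (fun v => F v.1.1 v.1.2 v.2)).
transitivity (\sum_(bi : bool * 'I_n) \sum_(j | pairb D S (bi.1, bi.2, j)) F bi.1 bi.2 j).
  by rewrite pair_big_dep /=; apply: eq_big => -[[b i] j].
rewrite -(pair_big xpredT xpredT (fun b i => \sum_(j | pairb D S (b, i, j)) F b i j)) /=.
rewrite big_bool /= -big_split /=. by [].
Qed.
Lemma mx_r (R : realType) (a : R) : a <= 0 -> Num.max a 0 = 0.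
Proof. move=> h; exact: max_r h. Qed.
Lemma mx_l (R : realType) (a : R) : 0 <= a -> Num.max a 0 = a.
Proof. move=> h; exact: max_l h. Qed.
Lemma mx_ge0 (R : realType) (a : R) : 0 <= Num.max a 0.
Proof. case: (leP a 0) => h; lra. Qed.
Lemma mx_ge (R : realType) (a : R) : a <= Num.max a 0.
Proof. case: (leP a 0) => h; lra. Qed.

Lemma maxsq_le (R : realType) (a a' : R) :
  Num.max a' 0 ^+ 2 <= Num.max a 0 ^+ 2 + 2 * Num.max a 0 * (a' - a) + (a' - a) ^+ 2.
Proof.
have -> : Num.max a 0 ^+ 2 + 2 * Num.max a 0 * (a' - a) + (a' - a) ^+ 2
  = (Num.max a 0 + (a' - a)) ^+ 2 by ring.
case: (leP a' 0) => h'.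
  rewrite expr0n /=; apply: sqr_ge0.
case: (leP a 0) => h.
  rewrite add0r; nra.
have -> : a + (a' - a) = a' by ring.
by [].
Qed.

Lemma small_s (R : realType) (G K : R) : 0 <= K ->
  (forall s, 0 < s -> s <= 1 -> 0 <= s * G + s ^+ 2 * K) -> 0 <= G.
Proof.
move=> K0 H; rewrite leNgt; apply/negP => G0.
pose s := - G / (2 * (K - G)).
have KG : 0 < K - G by lra.
have s0 : 0 < s by rewrite /s; apply: divr_gt0; lra.
have s1 : s * (2 * (K - G)) = - G by rewrite /s mulfVK //; apply/lt0r_neq0; lra.
have s1' : s <= 1 by nra.
have := H s s0 s1'.
nra.
Qed.

Lemma CS (R : realType) (I : finType) (w v : I -> R) :
  \sum_i w i * v i <= Num.sqrt (\sum_i w i ^+ 2) * Num.sqrt (\sum_i v i ^+ 2).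
Proof.
set X := \sum_i w i ^+ 2; set Y := \sum_i v i ^+ 2; set Z := \sum_i w i * v i.
have X0 : 0 <= X by apply: sumr_ge0 => i _; apply: sqr_ge0.
have Y0 : 0 <= Y by apply: sumr_ge0 => i _; apply: sqr_ge0.
have quad : forall t, 0 <= t ^+ 2 * X - 2 * t * Z + Y.
  move=> t.
  have -> : t ^+ 2 * X - 2 * t * Z + Y = \sum_i (t * w i - v i) ^+ 2.
    rewrite /X /Y /Z !mulr_sumr -sumrN -!big_split /=.
    by apply: eq_bigr => i _; ring.
  by apply: sumr_ge0 => i _; apply: sqr_ge0.
case: (leP Z 0) => Z0.
  apply: le_trans Z0 _; apply: mulr_ge0; apply: sqrtr_ge0.
case: (eqVneq X 0) => [X00|Xn0].
  exfalso.
  have := quad (Y / (2 * Z) + 1).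
  rewrite X00 mulr0 sub0r.
  have -> : 2 * (Y / (2 * Z) + 1) * Z = Y + 2 * Z.
    by field; apply/lt0r_neq0.
  lra.
have Xp : 0 < X by rewrite lt_def Xn0 X0.
have ZZ : Z ^+ 2 <= X * Y.
  have := quad (Z / X).
  have -> : (Z / X) ^+ 2 * X - 2 * (Z / X) * Z + Y = Y - Z ^+ 2 / X.
    by field; apply/lt0r_neq0.
  rewrite subr_ge0 ler_pdivrMr // => h. by rewrite mulrC.
rewrite -sqrtrM //.
have -> : Z = Num.sqrt (Z ^+ 2) by rewrite sqrtr_sqr ger0_norm //; apply: ltW.
by rewrite ler_sqrt //; apply: mulr_ge0.
Qed.

Definition alpha_of (R : realType) n p (x : 'I_n -> 'I_p -> R) (D S : 'I_n -> {set 'I_n})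
  (L U : R) (m : 'I_p -> R) (q : pidx D S) : R :=
  2 * Num.max (tvec L U q - sgnq R q * dotp m (cvec x (qi q) (qj q))) 0.
Arguments alpha_of {R n p} x D S L U m q.

Lemma primal_Q (R : realType) n p (x : 'I_n -> 'I_p -> R) (D S : 'I_n -> {set 'I_n})
  (L U eta lam : R) (m : 'I_p -> R) :
  primal x D S L U eta lam m =
  \sum_(q : pidx D S) loss (tvec L U q) (sgnq R q * dotp m (cvec x (qi q) (qj q)))
  + lam * (\sum_(k < p) m k + eta / 2 * \sum_(k < p) m k ^+ 2).
Proof.
rewrite /primal; congr (_ + _).
pose F := fun b i j => loss (if b then L else - U) ((if b then 1 else -1) * dotp m (cvec x i j)).
transitivity (\sum_(q : pidx D S) F (qb q) (qi q) (qj q)); last by [].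
rewrite sumQ; apply: eq_bigr => i _ /=; rewrite /F /=.
by congr (_ + _); apply: eq_bigr => l _; rewrite ?mul1r ?mulN1r.
Qed.

Lemma exch (R : realType) n p (x : 'I_n -> 'I_p -> R) (D S : 'I_n -> {set 'I_n})
  (al : pidx D S -> R) (d : 'I_p -> R) :
  \sum_(q : pidx D S) al q * (sgnq R q * dotp d (cvec x (qi q) (qj q)))
  = \sum_(k < p) d k * Cmul x al k.
Proof.
rewrite /Cmul /dotp.
under eq_bigr => q _ do rewrite mulr_sumr mulr_sumr.
rewrite exchange_big /=; apply: eq_bigr => k _; rewrite mulr_sumr.
by apply: eq_bigr => q _; ring.
Qed.

Lemma sum_lin (R : realType) (I : finType) (a b : I -> R) (s : R) :
  \sum_i (a i + s * b i) = \sum_i a i + s * \sum_i b i.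
Proof. by rewrite big_split mulr_sumr. Qed.

Lemma sum_sq_lin (R : realType) (I : finType) (a b : I -> R) (s : R) :
  \sum_i (a i + s * b i) ^+ 2 = \sum_i a i ^+ 2 + 2 * s * \sum_i a i * b i + s ^+ 2 * \sum_i b i ^+ 2.
Proof.
rewrite (eq_bigr (fun i => a i ^+ 2 + (2 * s) * (a i * b i) + s ^+ 2 * b i ^+ 2)); last by move=> i _; ring.
by rewrite !big_split /= -!mulr_sumr.
Qed.

Lemma dotp_lin (R : realType) p (m d c : 'I_p -> R) (s : R) :
  dotp (fun k => m k + s * d k) c = dotp m c + s * dotp d c.
Proof.
rewrite /dotp -sum_lin; apply: eq_bigr => k _; ring.
Qed.

Lemma primal_VI (R : realType) n p (x : 'I_n -> 'I_p -> R) (D S : 'I_n -> {set 'I_n})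
  (L U eta lam : R) (ms : 'I_p -> R) :
  0 <= eta -> 0 <= lam -> primal_opt x D S L U eta lam ms ->
  forall m' : 'I_p -> R, (forall k, 0 <= m' k) ->
  0 <= \sum_(k < p) (lam + lam * eta * ms k - Cmul x (alpha_of x D S L U ms) k) * (m' k - ms k).
Proof.
move=> eta0 lam0 [ms0 opt] m' m'0.
set al := alpha_of x D S L U ms.
pose d k := m' k - ms k.
pose e (q : pidx D S) := sgnq R q * dotp d (cvec x (qi q) (qj q)).
have K0 : 0 <= \sum_q e q ^+ 2 + lam * eta / 2 * \sum_k d k ^+ 2.
  apply: addr_ge0; first by apply: sumr_ge0 => q _; apply: sqr_ge0.
  apply: mulr_ge0; first by apply: mulr_ge0; [apply: mulr_ge0|]; lra.
  by apply: sumr_ge0 => q _; apply: sqr_ge0.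
apply: (@small_s R _ _ K0) => s s0 s1.
pose ms' k := ms k + s * d k.
have feas : forall k, 0 <= ms' k.
  move=> k; rewrite /ms' /d.
  have := ms0 k; have := m'0 k; nra.
have := opt ms' feas.
rewrite !primal_Q.
have Hloss : \sum_(q : pidx D S) loss (tvec L U q) (sgnq R q * dotp ms' (cvec x (qi q) (qj q)))
   <= \sum_(q : pidx D S) loss (tvec L U q) (sgnq R q * dotp ms (cvec x (qi q) (qj q)))
      - s * \sum_q al q * e q + s ^+ 2 * \sum_q e q ^+ 2.
  rewrite !mulr_sumr -sumrN -!big_split /=; apply: ler_sum => q _.
  rewrite /ms' dotp_lin /loss /al /alpha_of.
  set y := sgnq R q * dotp ms (cvec x (qi q) (qj q)).
  have := @maxsq_le R (tvec L U q - y) (tvec L U q - sgnq R q * (dotp ms (cvec x (qi q) (qj q)) + s * dotp d (cvec x (qi q) (qj q)))).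
  rewrite /e -/y.
  have -> : tvec L U q - sgnq R q * (dotp ms (cvec x (qi q) (qj q)) + s * dotp d (cvec x (qi q) (qj q))) - (tvec L U q - y)
     = - (s * (sgnq R q * dotp d (cvec x (qi q) (qj q)))) by rewrite /y; ring.
  move=> h; apply: (le_trans h).
  rewrite le_eqVlt; apply/orP; left; apply/eqP; ring.
rewrite /e exch in Hloss.
have E1 : \sum_k ms' k = \sum_k ms k + s * \sum_k d k by rewrite /ms' sum_lin.
have E2 : \sum_k ms' k ^+ 2 = \sum_k ms k ^+ 2 + 2 * s * \sum_k ms k * d k + s ^+ 2 * \sum_k d k ^+ 2
  by rewrite /ms' sum_sq_lin.
have EG : \sum_k (lam + lam * eta * ms k - Cmul x al k) * (m' k - ms k)
   = lam * \sum_k d k + lam * eta * \sum_k ms k * d k - \sum_k d k * Cmul x al k.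
  rewrite !mulr_sumr -sumrN -!big_split /=; apply: eq_bigr => k _; rewrite /d; ring.
rewrite EG E1 E2 => h.
rewrite /e.
set A := \sum_q _ in Hloss h. 
nra.
Qed.

Lemma Cmul_lin (R : realType) n p (x : 'I_n -> 'I_p -> R) (D S : 'I_n -> {set 'I_n})
  (a b : pidx D S -> R) (s : R) k :
  Cmul x (fun q => a q + s * b q) k = Cmul x a k + s * Cmul x b k.
Proof. by rewrite /Cmul -sum_lin; apply: eq_bigr => q _; ring. Qed.

Lemma dual_VI (R : realType) n p (x : 'I_n -> 'I_p -> R) (D S : 'I_n -> {set 'I_n})
  (L U eta lam0 : R) (al0 : pidx D S -> R) :
  0 < eta -> 0 < lam0 -> dual_opt x L U eta lam0 al0 ->
  forall be : pidx D S -> R, (forall q, 0 <= be q) ->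
  0 <= \sum_q (al0 q / 2 - tvec L U q) * (be q - al0 q)
       + \sum_k (lam0 * eta)^-1 * Num.max (Cmul x al0 k - lam0) 0 * Cmul x (fun q => be q - al0 q) k.
Proof.
move=> eta0 lp [al00 opt] be be0.
pose d q := be q - al0 q.
pose c := (lam0 * eta)^-1.
have c0 : 0 < c by rewrite /c invr_gt0; apply: mulr_gt0.
have hc : forall z, lam0 * eta / 2 * (c * z) ^+ 2 = c / 2 * z ^+ 2.
  move=> z; rewrite /c; field; apply/andP; split; apply/lt0r_neq0 => //.
have K0 : 0 <= 1 / 4 * \sum_q d q ^+ 2 + c / 2 * \sum_k Cmul x d k ^+ 2.
  apply: addr_ge0; apply: mulr_ge0; try lra;
  by apply: sumr_ge0 => q _; apply: sqr_ge0.
apply: (@small_s R _ _ K0) => s s0 s1.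
pose al' q := al0 q + s * d q.
have feas : forall q, 0 <= al' q.
  move=> q; rewrite /al' /d.
  have := al00 q; have := be0 q; nra.
have := opt al' feas.
rewrite /dual.
have Hq : lam0 * eta / 2 * \sum_k (c * Num.max (Cmul x al' k - lam0) 0) ^+ 2
   <= lam0 * eta / 2 * \sum_k (c * Num.max (Cmul x al0 k - lam0) 0) ^+ 2
      + s * \sum_k c * Num.max (Cmul x al0 k - lam0) 0 * Cmul x d k
      + s ^+ 2 * (c / 2 * \sum_k Cmul x d k ^+ 2).
  rewrite !mulr_sumr -!big_split /=; apply: ler_sum => k _.
  rewrite !hc /al' Cmul_lin.
  have := @maxsq_le R (Cmul x al0 k - lam0) (Cmul x al0 k + s * Cmul x d k - lam0).
  have -> : Cmul x al0 k + s * Cmul x d k - lam0 - (Cmul x al0 k - lam0) = s * Cmul x d k by ring.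
  move=> h.
  have h2 := ler_wpM2l (ltW (divr_gt0 c0 (ltr0Sn R 1))) h.
  apply: (le_trans h2).
  rewrite le_eqVlt; apply/orP; left; apply/eqP.
  rewrite /c; field; apply/andP; split; apply/lt0r_neq0 => //.
have E1 : \sum_q al' q ^+ 2 = \sum_q al0 q ^+ 2 + 2 * s * \sum_q al0 q * d q + s ^+ 2 * \sum_q d q ^+ 2
  by rewrite /al' sum_sq_lin.
have E2 : \sum_q tvec L U q * al' q = \sum_q tvec L U q * al0 q + s * \sum_q tvec L U q * d q.
  rewrite -sum_lin; apply: eq_bigr => q _; rewrite /al'; ring.
have EG : \sum_q (al0 q / 2 - tvec L U q) * (be q - al0 q)
   = 1 / 2 * \sum_q al0 q * d q - \sum_q tvec L U q * d q.
  rewrite !mulr_sumr -sumrN -!big_split /=; apply: eq_bigr => q _; rewrite /d; ring.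
rewrite EG E1 E2 -/c => h.
have -> : \sum_k c * Num.max (Cmul x al0 k - lam0) 0 * Cmul x (fun q => be q - al0 q) k
  = \sum_k c * Num.max (Cmul x al0 k - lam0) 0 * Cmul x d k by [].
rewrite -/c in Hq.
nra.
Qed.

Lemma Cmul_ext (R : realType) n p (x : 'I_n -> 'I_p -> R) (D S : 'I_n -> {set 'I_n})
  (f g : pidx D S -> R) k : (forall q, f q = g q) -> Cmul x f k = Cmul x g k.
Proof. by move=> h; rewrite /Cmul; apply: eq_bigr => q _; rewrite h. Qed.

Lemma Cmul_comb (R : realType) n p (x : 'I_n -> 'I_p -> R) (D S : 'I_n -> {set 'I_n})
  (f g : pidx D S -> R) (a b : R) k :
  Cmul x (fun q => a * f q + b * g q) k = a * Cmul x f k + b * Cmul x g k.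
Proof.
rewrite /Cmul !mulr_sumr -big_split; apply: eq_bigr => q _ /=; ring.
Qed.

Lemma Cmul_scale (R : realType) n p (x : 'I_n -> 'I_p -> R) (D S : 'I_n -> {set 'I_n})
  (f : pidx D S -> R) (a : R) k :
  Cmul x (fun q => a * f q) k = a * Cmul x f k.
Proof.
rewrite /Cmul !mulr_sumr; apply: eq_bigr => q _ /=; ring.
Qed.

Lemma F1 (R : realType) n p (x : 'I_n -> 'I_p -> R) (D S : 'I_n -> {set 'I_n})
  (L U : R) (ms : 'I_p -> R) (be : pidx D S -> R) : (forall q, 0 <= be q) ->
  0 <= \sum_q (alpha_of x D S L U ms q / 2 - tvec L U q) * (be q - alpha_of x D S L U ms q)
       + \sum_k ms k * Cmul x (fun q => be q - alpha_of x D S L U ms q) k.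
Proof.
move=> be0; set al := alpha_of x D S L U ms.
rewrite -(exch _ _ _ x _ _ (fun q => be q - al q) ms) -big_split /=.
apply: sumr_ge0 => q _.
rewrite /al /alpha_of.
set y := sgnq R q * dotp ms (cvec x (qi q) (qj q)).
have := be0 q.
case: (leP (tvec L U q - y) 0) => h hb; nra.
Qed.

Lemma key (R : realType) n p (x : 'I_n -> 'I_p -> R) (D S : 'I_n -> {set 'I_n})
  (L U eta lam lam0 : R) (ms : 'I_p -> R) (al0 : pidx D S -> R) :
  0 < eta -> 0 < lam -> 0 < lam0 ->
  primal_opt x D S L U eta lam ms -> dual_opt x L U eta lam0 al0 ->
  \sum_q (alpha_of x D S L U ms q - al0 q) * (alpha_of x D S L U ms q / lam - al0 q / lam0) <= 0.
Proof.
move=> eta0 l0 lp Popt Dopt; set al := alpha_of x D S L U ms.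
have al00 := Dopt.1.
have ms0 := Popt.1.
have alp : forall q, 0 <= al q.
  move=> q; rewrite /al /alpha_of; apply: mulr_ge0 => //; apply: mx_ge0.
pose A q := al q / lam - al0 q / lam0.
pose CA k := Cmul x A k.
pose m0 k := (lam0 * eta)^-1 * Num.max (Cmul x al0 k - lam0) 0.
have lamn : lam != 0 by apply/lt0r_neq0.
have lam0n : lam0 != 0 by apply/lt0r_neq0.
have T1 : \sum_q (al q / 2 - tvec L U q) * A q + \sum_k ms k * CA k <= 0.
  have h := F1 _ _ _ x D S L U ms (fun q => lam / lam0 * al0 q).
  have := h (fun q => mulr_ge0 (ltW (divr_gt0 l0 lp)) (al00 q)).
  rewrite -/al.
  have -> : \sum_q (al q / 2 - tvec L U q) * (lam / lam0 * al0 q - al q)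
     = - lam * \sum_q (al q / 2 - tvec L U q) * A q.
    rewrite mulr_sumr; apply: eq_bigr => q _; rewrite /A; field; by rewrite ?lamn ?lam0n.
  have -> : \sum_k ms k * Cmul x (fun q => lam / lam0 * al0 q - al q) k
     = - lam * \sum_k ms k * CA k.
    rewrite mulr_sumr; apply: eq_bigr => k _; rewrite /CA.
    rewrite (Cmul_ext _ _ _ x _ _ _ (fun q => (- lam) * A q) k); last first.
      move=> q; rewrite /A; field; by rewrite ?lamn ?lam0n.
    rewrite Cmul_scale; ring.
  move=> h2.
  have : 0 <= - lam * (\sum_q (al q / 2 - tvec L U q) * A q + \sum_k ms k * CA k) by rewrite mulrDr.
  rewrite mulNr oppr_ge0 pmulr_rle0 //.
have T2 : 0 <= \sum_q (al0 q / 2 - tvec L U q) * A q + \sum_k m0 k * CA k.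
  have h := dual_VI _ _ _ x D S L U eta lam0 al0 eta0 lp Dopt (fun q => lam0 / lam * al q).
  have := h (fun q => mulr_ge0 (ltW (divr_gt0 lp l0)) (alp q)).
  have -> : \sum_q (al0 q / 2 - tvec L U q) * (lam0 / lam * al q - al0 q)
     = lam0 * \sum_q (al0 q / 2 - tvec L U q) * A q.
    rewrite mulr_sumr; apply: eq_bigr => q _; rewrite /A; field; by rewrite ?lamn ?lam0n.
  have -> : \sum_k (lam0 * eta)^-1 * Num.max (Cmul x al0 k - lam0) 0 * Cmul x (fun q => lam0 / lam * al q - al0 q) k
     = lam0 * \sum_k m0 k * CA k.
    rewrite mulr_sumr; apply: eq_bigr => k _; rewrite /CA /m0.
    rewrite (Cmul_ext _ _ _ x _ _ (fun q => lam0 / lam * al q - al0 q) (fun q => lam0 * A q) k); last first.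
      move=> q; rewrite /A; field; by rewrite ?lamn ?lam0n.
    rewrite Cmul_scale; ring.
  rewrite -mulrDr pmulr_rge0 //.
have m00 : forall k, 0 <= m0 k.
  move=> k; rewrite /m0; apply: mulr_ge0; last by apply: mx_ge0.
  by rewrite invr_ge0; apply: mulr_ge0; apply: ltW.
have F3 := primal_VI _ _ _ x D S L U eta lam ms (ltW eta0) (ltW l0) Popt m0 m00.
rewrite -/al in F3.
have F3' : 0 <= \sum_k (lam0 + lam0 * eta * m0 k - Cmul x al0 k) * (ms k - m0 k).
  apply: sumr_ge0 => k _; rewrite /m0.
  have ms0k := ms0 k.
  have etn : lam0 * eta != 0 by apply/lt0r_neq0; apply: mulr_gt0.
  case: (leP (Cmul x al0 k - lam0) 0) => hz.
    rewrite mulr0 mulr0 addr0 subr0; nra.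
  have -> : lam0 + lam0 * eta * ((lam0 * eta)^-1 * (Cmul x al0 k - lam0)) - Cmul x al0 k = 0.
    by rewrite mulrA mulfV // mul1r; ring.
  by rewrite mul0r.
have ECA : forall k, CA k = lam^-1 * Cmul x al k + (- lam0^-1) * Cmul x al0 k.
  move=> k; rewrite /CA -Cmul_comb; apply: Cmul_ext => q; rewrite /A; ring.
have Mon : 0 <= \sum_k (ms k - m0 k) * CA k.
  have : 0 <= lam^-1 * \sum_k (lam + lam * eta * ms k - Cmul x al k) * (m0 k - ms k)
              + lam0^-1 * \sum_k (lam0 + lam0 * eta * m0 k - Cmul x al0 k) * (ms k - m0 k).
    apply: addr_ge0; apply: mulr_ge0 => //; rewrite invr_ge0; apply: ltW => //.
  move=> h; apply: (le_trans h).
  rewrite !mulr_sumr -big_split /=; apply: ler_sum => k _.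
  rewrite ECA.
  have : 0 <= eta * (ms k - m0 k) ^+ 2 by apply: mulr_ge0; [apply: ltW|apply: sqr_ge0].
  have -> : lam^-1 * ((lam + lam * eta * ms k - Cmul x al k) * (m0 k - ms k)) +
    lam0^-1 * ((lam0 + lam0 * eta * m0 k - Cmul x al0 k) * (ms k - m0 k))
    = (ms k - m0 k) * (lam^-1 * Cmul x al k + - lam0^-1 * Cmul x al0 k) - eta * (ms k - m0 k) ^+ 2.
    by field; rewrite ?lamn ?lam0n.
  lra.
have EA : \sum_q (al q - al0 q) * A q
   = 2 * (\sum_q (al q / 2 - tvec L U q) * A q - \sum_q (al0 q / 2 - tvec L U q) * A q).
  rewrite -sumrB mulr_sumr; apply: eq_bigr => q _; field; by rewrite ?pnatr_eq0.
have EM : \sum_k (ms k - m0 k) * CA k = \sum_k ms k * CA k - \sum_k m0 k * CA k.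
  rewrite -sumrB; apply: eq_bigr => k _; ring.
rewrite EA; rewrite EM in Mon.
lra.
Qed.

Lemma tri (R : realType) (I : finType) (u v : I -> R) :
  Num.sqrt (\sum_i (u i + v i) ^+ 2) <= Num.sqrt (\sum_i u i ^+ 2) + Num.sqrt (\sum_i v i ^+ 2).
Proof.
have U0 : 0 <= Num.sqrt (\sum_i u i ^+ 2) by apply: sqrtr_ge0.
have V0 : 0 <= Num.sqrt (\sum_i v i ^+ 2) by apply: sqrtr_ge0.
have X0 : 0 <= \sum_i u i ^+ 2 by apply: sumr_ge0 => i _; apply: sqr_ge0.
have Y0 : 0 <= \sum_i v i ^+ 2 by apply: sumr_ge0 => i _; apply: sqr_ge0.
have E : \sum_i (u i + v i) ^+ 2 = \sum_i u i ^+ 2 + 2 * \sum_i u i * v i + \sum_i v i ^+ 2.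
  rewrite mulr_sumr -!big_split; apply: eq_bigr => i _ /=; ring.
have C := CS _ _ u v.
have -> : Num.sqrt (\sum_i u i ^+ 2) + Num.sqrt (\sum_i v i ^+ 2)
  = Num.sqrt ((Num.sqrt (\sum_i u i ^+ 2) + Num.sqrt (\sum_i v i ^+ 2)) ^+ 2).
  by rewrite sqrtr_sqr ger0_norm //; apply: addr_ge0.
rewrite ler_sqrt; last by apply: sqr_ge0.
rewrite E sqrrD !sqr_sqrtr //.
lra.
Qed.

Lemma desc_le (p : nat) (par : 'I_p -> option 'I_p) (f : 'I_p -> nat) :
  (forall c k0, par c = Some k0 -> (f c <= f k0)%N) ->
  forall a b, desc par a b -> (f b <= f a)%N.
Proof.
move=> H a b /connectP [s pth ->].
elim: s a pth => [|y s IH] a //= /andP [/eqP hy pth].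
apply: leq_trans (IH y pth) _; exact: H hy.
Qed.

Lemma cvec_le1 (R : realType) (a a' b b' : R) :
  0 <= a' -> a' <= a -> 0 <= b' -> b' <= b -> (a' - b') ^+ 2 <= Num.max b a ^+ 2.
Proof.
move=> h1 h2 h3 h4.
case: (leP b a) => h; nra.
Qed.

Theorem theorem7 (R : realType) (n K p : nat)
  (D S : 'I_n -> {set 'I_n})
  (cnt : 'I_n -> 'I_p -> nat) (g : nat -> R) (x : 'I_n -> 'I_p -> R)
  (par : 'I_p -> option 'I_p) (root : 'I_p)
  (L U eta lam lam0 eps : R)
  (al0s al0 : pidx D S -> R) (ms : 'I_p -> R) (k : 'I_p) :
  (0 < n)%N -> (0 < K)%N -> (0 < p)%N ->
  (forall i, #|D i| = K) -> (forall i, #|S i| = K) ->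
  (* graph-mining features x_{i,k} = g(#(H_k in G_i)) *)
  (forall c, 0 <= g c) -> (forall c1 c2, (c1 <= c2)%N -> g c1 <= g c2) ->
  (forall i k0, x i k0 = g (cnt i k0)) ->
  (* rooted tree; occurrence counts are nonincreasing from parent to child *)
  par root = None -> (forall k0, par k0 = None -> k0 = root) ->
  (forall k0, desc par root k0) ->
  (forall i c k0, par c = Some k0 -> (cnt i c <= cnt i k0)%N) ->
  0 <= U -> U <= L -> 0 < eta ->
  0 < lam -> lam <= lam0 ->
  dual_opt x L U eta lam0 al0s ->
  (forall q, 0 <= al0 q) -> 0 <= eps ->
  norm2 (fun q => al0 q - al0s q) <= eps ->
  primal_opt x D S L U eta lam ms ->
  lam_a x lam0 eps al0 k <= lam -> lam <= lam0 ->
  forall k', desc par k k' -> ms k' = 0.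
Proof.
move=> n0 K0 p0 hD hS g0 gmono hx proot hroot hdesc hcnt U0 UL eta0 l0 lamlam0 Dopt al00 eps0
  hnorm Popt hla _ k' hkk'.
have lp : 0 < lam0 by apply: lt_le_trans lamlam0.
have Key := key _ _ _ x D S L U eta lam lam0 ms al0s eta0 l0 lp Popt Dopt.
set al := alpha_of x D S L U ms in Key.
have xge0 : forall i j, 0 <= x i j by move=> i j; rewrite hx.
have xmon : forall i, x i k' <= x i k.
  move=> i; rewrite !hx; apply: gmono.
  exact: (desc_le _ par (fun c => cnt i c) (fun c k0 h => hcnt i c k0 h) k k' hkk').
have alp : forall q, 0 <= al q.
  move=> q; rewrite /al /alpha_of; apply: mulr_ge0 => //; apply: mx_ge0.
pose w (q : pidx D S) := if qb q then Num.max (x (qj q) k) (x (qi q) k) ^+ 2 else 0.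
have B1 : Cmul x al k' <= \sum_q w q * al q.
  rewrite /Cmul; apply: ler_sum => q _; rewrite /sgnq /w; case: (qb q).
    rewrite mul1r; apply: ler_wpM2r => //; rewrite /cvec.
    by apply: cvec_le1; rewrite ?xge0 ?xmon.
  rewrite mul0r mulN1r mulNr oppr_le0; apply: mulr_ge0 => //; apply: sqr_ge0.
pose c := (lam0 + lam) / (2 * lam0).
pose r := (lam0 - lam) / (2 * lam0).
have lp2 : 2 * lam0 != 0 by apply/lt0r_neq0; lra.
have lamn : lam != 0 by apply/lt0r_neq0.
have lam0n : lam0 != 0 by apply/lt0r_neq0.
have r0 : 0 <= r by rewrite /r; apply: divr_ge0; lra.
have cr : c + r = 1 by rewrite /c /r; field.
have Ball : \sum_q (al q - c * al0s q) ^+ 2 <= r ^+ 2 * \sum_q al0s q ^+ 2.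
  have -> : \sum_q (al q - c * al0s q) ^+ 2 = r ^+ 2 * \sum_q al0s q ^+ 2
      + lam * \sum_q (al q - al0s q) * (al q / lam - al0s q / lam0).
    rewrite !mulr_sumr -big_split; apply: eq_bigr => q _ /=; rewrite /c /r.
    by field; rewrite ?lamn ?lam0n.
  have : lam * \sum_q (al q - al0s q) * (al q / lam - al0s q / lam0) <= 0.
    by rewrite pmulr_rle0.
  lra.
set Wn := Num.sqrt (\sum_q w q ^+ 2).
have Wn0 : 0 <= Wn by apply: sqrtr_ge0.
set N0s := norm2 al0s.
set N := norm2 al0.
have N0 : 0 <= N by apply: sqrtr_ge0.
have Bn : Num.sqrt (\sum_q (al q - c * al0s q) ^+ 2) <= r * N0s.
  rewrite /N0s /norm2 -(ger0_norm r0) -sqrtr_sqr -sqrtrM; last by apply: sqr_ge0.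
  by rewrite ler_sqrt //; apply: mulr_ge0; [apply: sqr_ge0| apply: sumr_ge0 => q _; apply: sqr_ge0].
have CS1 := CS _ _ w (fun q => al q - c * al0s q).
rewrite -/Wn in CS1.
have S1 : \sum_q w q * al q = c * \sum_q w q * al0s q + \sum_q w q * (al q - c * al0s q).
  rewrite mulr_sumr -big_split; apply: eq_bigr => q _ /=; ring.
have S2 : \sum_q w q * al0s q = \sum_q w q * al0 q + \sum_q w q * (al0s q - al0 q).
  rewrite -big_split; apply: eq_bigr => q _ /=; ring.
have CS2 := CS _ _ w (fun q => al0s q - al0 q).
have En : \sum_q (al0s q - al0 q) ^+ 2 = \sum_q (al0 q - al0s q) ^+ 2.
  by apply: eq_bigr => q _; ring.
rewrite /= En -/(norm2 (fun q => al0 q - al0s q)) -/Wn in CS2.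
have Aeq : \sum_q w q * al0 q = a_coef x al0 k.
  rewrite /a_coef [RHS]big_mkcond /=; apply: eq_bigr => q _; rewrite /w.
  by case: (qb q); rewrite ?mul0r // mulrC.
have Tri : N0s <= N + eps.
  have := tri _ _ al0 (fun q => al0s q - al0 q).
  have -> : \sum_q (al0 q + (al0s q - al0 q)) ^+ 2 = \sum_q al0s q ^+ 2.
    by apply: eq_bigr => q _; congr (_ ^+ 2); ring.
  rewrite En -/(norm2 al0s) -/(norm2 al0) -/(norm2 (fun q => al0 q - al0s q)) -/N0s -/N.
  lra.
have Wb : Wn <= b_coef x D S k.
  rewrite /Wn /b_coef -(sumQ R n D S (fun b i j => Num.max (x i k) (x j k) ^+ 4)).
  rewrite ler_sqrt; last by apply: sumr_ge0 => q _; rewrite (_ : 4 = 2 * 2)%N // exprM; apply: sqr_ge0.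
  apply: ler_sum => q _; rewrite /w; case: (qb q).
    by rewrite -exprM maxC.
  by rewrite expr0n /= (_ : 4 = 2 * 2)%N // exprM; apply: sqr_ge0.
have CS3 := CS _ _ w al0.
rewrite Aeq -/(norm2 al0) -/N in CS3.
have b0 : 0 <= b_coef x D S k by apply: sqrtr_ge0.
have Den : 0 < 2 * lam0 + N * b_coef x D S k - a_coef x al0 k.
  have : Wn * N <= b_coef x D S k * N by apply: ler_wpM2r.
  rewrite -/Wn in CS3. lra.
move: hla; rewrite /lam_a ler_pdivrMr // => hla.
have Cb : Cmul x al k' <= lam.
  apply: (le_trans B1); rewrite S1 S2 Aeq.
  have h1 : Wn * Num.sqrt (\sum_q (al q - c * al0s q) ^+ 2) <= Wn * (r * N0s) by apply: ler_wpM2l.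
  have h2 : Wn * r * N0s <= Wn * r * (N + eps) by apply: ler_wpM2l => //; apply: mulr_ge0.
  have h3 : Wn * eps <= b_coef x D S k * eps by apply: ler_wpM2r.
  have h4 : Wn * r * N <= b_coef x D S k * r * N by apply: ler_wpM2r => //; apply: ler_wpM2r.
  have c0 : 0 <= c by rewrite /c; apply: divr_ge0; lra.
  have h5 : c * \sum_q w q * (al0s q - al0 q) <= c * (Wn * eps).
    by apply: ler_wpM2l => //; apply: (le_trans CS2); apply: ler_wpM2l.
  have E : 2 * lam0 * (c * a_coef x al0 k + b_coef x D S k * eps + b_coef x D S k * r * N)
     = (lam0 + lam) * a_coef x al0 k + 2 * lam0 * b_coef x D S k * eps + (lam0 - lam) * b_coef x D S k * N.
    rewrite /c /r; field; rewrite ?lam0n ?lamn ?pnatr_eq0 //.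
  have h6 : c * a_coef x al0 k + b_coef x D S k * eps + b_coef x D S k * r * N <= lam.
    have : 2 * lam0 * (c * a_coef x al0 k + b_coef x D S k * eps + b_coef x D S k * r * N) <= 2 * lam0 * lam.
      rewrite E; move: hla; rewrite -/N; lra.
    by rewrite ler_pM2l //; lra.
  have cW : c * (Wn * eps) + Wn * r * eps = Wn * eps.
    by rewrite -[RHS]mul1r -cr; ring.
  rewrite mulrA in h1.
  nra.
have feas : forall j, 0 <= (fun j => if j == k' then 0 else ms j) j.
  by move=> j /=; case: (j == k') => //; exact: Popt.1 j.
have F := primal_VI _ _ _ x D S L U eta lam ms (ltW eta0) (ltW l0) Popt _ feas.
rewrite (bigD1 k') //= eqxx big1 in F; last first.
  by move=> j /negbTE ->; rewrite subrr mulr0.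
rewrite -/al addr0 sub0r in F.
have ms0 := Popt.1 k'.
have le0 := mulr_gt0 l0 eta0.
apply/eqP; rewrite eq_le ms0 andbT.
have h1 : 0 <= (lam - Cmul x al k') * ms k' by apply: mulr_ge0 => //; lra.
have h2 : lam * eta * (ms k' * ms k') <= 0 by nra.
rewrite leNgt; apply/negP => h.
have := mulr_gt0 le0 (mulr_gt0 h h); lra.
Qed.
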